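(* Let $\mathcal{H},\mathcal{K}$ be real or complex Hilbert spaces and let $S:\mathcal{H}\to\mathcal{K}$ and $T:\mathcal{K}\to\mathcal{H}$ be (not necessarily densely defined or closed) linear operators. The following two statements are equivalent: (i) $T$ is densely defined and $S=T^*$; (ii) (a) $(\operatorname{ran} T)^{\perp}=\ker S$, and (b) $\operatorname{ran} S+\operatorname{ran} T^*\subset \operatorname{ran}(S\cap T^* )$.
   Context: Operators are identified with their graphs (linear relations). For a linear relation $R\subset\mathcal{K}\times\mathcal{H}$ its adjoint is the linear relation $R^*=\{(h',k')\in\mathcal{H}\times\mathcal{K}:\langle h,h'\rangle=\langle k,k'\rangle\ \forall (k,h)\in R\}$; it is an operator iff $R$ is densely defined, but in general may be multivalued. $\operatorname{ran}$ of a relation is the set of second coordinates, $\ker S=\{x:Sx=0\}$, and $S\cap T^*$ is the intersection of the graph of $S$ with $T^*$. *)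

(* Defs.v *)
From mathcomp Require Import all_boot all_algebra.
From mathcomp Require Import reals complex.
Set Implicit Arguments. Unset Strict Implicit. Unset Printing Implicit Defensive.
Import GRing.Theory Num.Theory.
Local Open Scope ring_scope.

(* Hilbert space over a scalar field F (to be instantiated with R or R[i])
   with conjugation cj (identity for R, Num.conj for R[i]).
   ip is linear in the first argument, conjugate-symmetric, positive definite,
   and the space is complete for the norm  ||x|| = sqrt (ip x x). *)
Definition ip_norm2 (F : numFieldType) (V : lmodType F) (ip : V -> V -> F)
  (x : V) : F := ip x x.

Record is_hilbert (F : numFieldType) (cj : F -> F) (V : lmodType F)
    (ip : V -> V -> F) : Prop := {
  ip_linl : forall (a : F) (x y z : V), ip (a *: x + y) z = a * ip x z + ip y z;
  ip_sym : forall x y : V, ip y x = cj (ip x y);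
  ip_pos : forall x : V, 0 <= ip x x;
  ip_def : forall x : V, ip x x = 0 -> x = 0;
  ip_complete : forall u : nat -> V,
    (forall e : F, 0 < e -> exists N : nat, forall m n : nat,
        (N <= m)%N -> (N <= n)%N -> ip_norm2 ip (u m - u n) < e) ->
    exists x : V, forall e : F, 0 < e -> exists N : nat, forall n : nat,
        (N <= n)%N -> ip_norm2 ip (u n - x) < e
}.

Record linop (F : numFieldType) (V W : lmodType F) := LinOp {
  dom : V -> Prop;
  app : V -> W;
  dom0 : dom 0;
  domL : forall (a : F) (x y : V), dom x -> dom y -> dom (a *: x + y);
  appL : forall (a : F) (x y : V), dom x -> dom y ->
           app (a *: x + y) = a *: app x + app y
}.

Definition graph (F : numFieldType) (V W : lmodType F) (A : linop V W)
  (x : V) (y : W) : Prop := dom A x /\ app A x = y.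

(* the adjoint T^* ⊂ H x K of an operator T : K -> H (a linear relation):
   (h', k') ∈ T^*  iff  <T k, h'> = <k, k'> for all k ∈ dom T *)
Definition adjoint_rel (F : numFieldType) (K H : lmodType F)
  (ipK : K -> K -> F) (ipH : H -> H -> F) (T : linop K H)
  (h' : H) (k' : K) : Prop :=
  forall k : K, dom T k -> ipH (app T k) h' = ipK k k'.

Definition dense_in (F : numFieldType) (V : lmodType F) (ip : V -> V -> F)
  (D : V -> Prop) : Prop :=
  forall (x : V) (e : F), 0 < e -> exists d : V, D d /\ ip_norm2 ip (x - d) < e.

Definition ran_rel (X Y : Type) (Rl : X -> Y -> Prop) (y : Y) : Prop :=
  exists x, Rl x y.

Definition thm38 (F : numFieldType) (cj : F -> F) : Prop :=
  forall (H K : lmodType F) (ipH : H -> H -> F) (ipK : K -> K -> F),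
  is_hilbert cj ipH -> is_hilbert cj ipK ->
  forall (S : linop H K) (T : linop K H),
  ( (* (i) T densely defined and S = T^* (as linear relations) *)
    dense_in ipK (dom T) /\
    (forall (h : H) (k : K), graph S h k <-> adjoint_rel ipK ipH T h k) )
  <->
  ( (* (a) (ran T)^⊥ = ker S *)
    (forall h : H, (forall y : H, ran_rel (graph T) y -> ipH y h = 0)
                   <-> (dom S h /\ app S h = 0)) /\
    (* (b) ran S + ran T^* ⊂ ran (S ∩ T^* ) *)
    (forall k : K,
       (exists a b : K, k = a + b /\ ran_rel (graph S) a /\
                        ran_rel (adjoint_rel ipK ipH T) b) ->
       ran_rel (fun h k' => graph S h k' /\ adjoint_rel ipK ipH T h k') k) ).

(* Main.v *)
Require Import Defs.
From mathcomp Require Import all_boot all_algebra.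
From mathcomp Require Import reals complex.
From mathcomp Require classical_sets boolp.
From mathcomp Require Import ring lra.
Import order.Order.TTheory GRing.Theory Num.Theory.
Local Open Scope ring_scope.

Section Gen.
Variables (R : realType) (F : numFieldType) (cj : F -> F)
  (r2f : {rmorphism R -> F}) (re : F -> R).
Hypothesis cjD : forall a b, cj (a + b) = cj a + cj b.
Hypothesis cjM : forall a b, cj (a * b) = cj a * cj b.
Hypothesis cjK : forall a, cj (cj a) = a.
Hypothesis cjr : forall s, cj (r2f s) = r2f s.
Hypothesis cj_nz : forall w, w * cj w = 0 -> w = 0.
Hypothesis r2f_le : forall a b, (r2f a <= r2f b) = (a <= b).
Hypothesis r2f_lt : forall a b, (r2f a < r2f b) = (a < b).
Hypothesis reK : forall z, 0 <= z -> r2f (re z) = z.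

Lemma cj0 : cj 0 = 0.
Proof. by apply: (addrI (cj 0)); rewrite -cjD !addr0. Qed.
Lemma cjN a : cj (- a) = - cj a.
Proof. by apply: (addrI (cj a)); rewrite -cjD !subrr cj0. Qed.

Lemma app0 (V W : lmodType F) (A : linop V W) : app A 0 = 0.
Proof.
have := @appL _ _ _ A 1 _ _ (dom0 A) (dom0 A); rewrite scale1r addr0 scale1r => h.
by apply: (addrI (app A 0)); rewrite addr0 -h.
Qed.
Lemma domD (V W : lmodType F) (A : linop V W) x y : dom A x -> dom A y -> dom A (x + y).
Proof. by move=> Dx Dy; have := domL 1 Dx Dy; rewrite scale1r. Qed.
Lemma domB (V W : lmodType F) (A : linop V W) x y : dom A x -> dom A y -> dom A (x - y).
Proof. by move=> Dx Dy; have := domL (-1) Dy Dx; rewrite scaleN1r addrC. Qed.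
Lemma appD (V W : lmodType F) (A : linop V W) x y : dom A x -> dom A y ->
  app A (x + y) = app A x + app A y.
Proof. by move=> Dx Dy; have := appL 1 Dx Dy; rewrite !scale1r. Qed.
Lemma appB (V W : lmodType F) (A : linop V W) x y : dom A x -> dom A y ->
  app A (x - y) = app A x - app A y.
Proof. by move=> Dx Dy; have := appL (-1) Dy Dx; rewrite !scaleN1r addrC [- _ + _]addrC. Qed.

Lemma v2 (V : zmodType) (x a b : V) : x - a - (x - b) = b - a.
Proof. by rewrite opprB addrC addrA subrK. Qed.
Lemma v3 (V : zmodType) (x y a b : V) : x - y + a - (x - (b - a)) = b - y.
Proof. by rewrite opprB addrC !addrA subrK addrAC subrK. Qed.

Lemma r2f_inj : injective r2f.
Proof. exact: fmorph_inj. Qed.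

Lemma small_inv (t : R) : 0 < t ->
  exists n0, forall m, (n0 <= m)%N -> (m.+1%:R)^-1 < t.
Proof.
move=> t0; exists (Num.Def.archi_bound (t^-1)) => m hm.
have ti : 0 < t^-1 by rewrite invr_gt0.
have h1 := archi_boundP (ltW ti).
have h2 : (Num.Def.archi_bound t^-1)%:R <= m%:R :> R by rewrite ler_nat.
have h3 : m%:R < m.+1%:R :> R by rewrite ltr_nat.
rewrite invf_plt ?posrE ?ltr0Sn //; lra.
Qed.

Lemma pos_r2f (e : F) : 0 < e -> exists e' : R, 0 < e' /\ e = r2f e'.
Proof.
move=> e0; exists (re e); rewrite -r2f_lt rmorph0 reK ?ltW //.
Qed.

Section Sp.
Variables (V : lmodType F) (ip : V -> V -> F).
Hypothesis Hh : is_hilbert cj ip.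

Lemma ipDl x y z : ip (x + y) z = ip x z + ip y z.
Proof. by have := ip_linl Hh 1 x y z; rewrite scale1r mul1r. Qed.
Lemma ip0l z : ip 0 z = 0.
Proof. by apply: (addrI (ip 0 z)); rewrite -ipDl !addr0. Qed.
Lemma ipZl a x z : ip (a *: x) z = a * ip x z.
Proof. by have := ip_linl Hh a x 0 z; rewrite addr0 ip0l addr0. Qed.
Lemma ipNl x z : ip (- x) z = - ip x z.
Proof. by rewrite -scaleN1r ipZl mulN1r. Qed.
Lemma ipDr x y z : ip z (x + y) = ip z x + ip z y.
Proof. by rewrite (ip_sym Hh) ipDl cjD -!(ip_sym Hh). Qed.
Lemma ipZr a x z : ip z (a *: x) = cj a * ip z x.
Proof. by rewrite (ip_sym Hh) ipZl cjM -!(ip_sym Hh). Qed.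
Lemma ip0r z : ip z 0 = 0.
Proof. by rewrite (ip_sym Hh) ip0l cj0. Qed.
Lemma ipNr x z : ip z (- x) = - ip z x.
Proof. by rewrite (ip_sym Hh) ipNl cjN -(ip_sym Hh). Qed.

Definition N (v : V) : R := re (ip v v).
Lemma NE v : r2f (N v) = ip v v.
Proof. by rewrite /N reK // (ip_pos Hh). Qed.
Lemma N_ge0 v : 0 <= N v.
Proof. by rewrite -r2f_le rmorph0 NE (ip_pos Hh). Qed.
Lemma N0 : N 0 = 0.
Proof. by apply: (fmorph_inj r2f); rewrite NE ip0l rmorph0. Qed.
Lemma N_eq0 v : N v = 0 -> v = 0.
Proof. by move=> h; apply: (ip_def Hh); rewrite -NE h rmorph0. Qed.

Definition Q (a b : V) : R := N (a + b) - N a - N b.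
Lemma QE a b : r2f (Q a b) = ip a b + ip b a.
Proof.
rewrite /Q !rmorphB !NE !ipDl !ipDr.
ring.
Qed.

Lemma Nexp a b s : N (a + r2f s *: b) = N a + s * Q a b + s ^+ 2 * N b.
Proof.
apply: (fmorph_inj r2f).
rewrite !rmorphD !rmorphM !NE QE !ipDl !ipDr !ipZl !ipZr cjr.
ring.
Qed.

Lemma NN v : N (- v) = N v.
Proof. by have := Nexp 0 v (-1); rewrite rmorphN1 scaleN1r /Q !add0r N0 => ->; ring. Qed.


Lemma CS a b : Q a b ^+ 2 <= 4 * N a * N b.
Proof.
have h s : 0 <= N a + s * Q a b + s ^+ 2 * N b by rewrite -Nexp; apply: N_ge0.
have Na := N_ge0 a; have Nb := N_ge0 b.
have [Nb0|Nbp] := eqVneq (N b) 0.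
  rewrite Nb0 mulr0.
  have [Q0|Qn] := eqVneq (Q a b) 0; first by rewrite Q0 expr0n.
  have := h (- (N a + 1) / Q a b).
  have -> : - (N a + 1) / Q a b * Q a b = - (N a + 1) by field.
  rewrite Nb0 mulr0 addr0; lra.
have Nbq : 0 < N b by rewrite lt0r Nbp Nb.
pose s := - Q a b / (2 * N b).
have e : s * N b = - Q a b / 2 by rewrite /s; field.
have := h s; nra.
Qed.

Lemma Nlow (w : V) (P : V -> Prop) (d : R) :
  (forall b, 0 < b -> exists u, P u /\ N (w - u) < b) ->
  (forall u, P u -> d <= N u) -> d <= N w.
Proof.
move=> ap lb; rewrite leNgt; apply/negP => lt.
have c0 := N_ge0 w.
pose g := d - N w.
have g0 : 0 < g by rewrite /g; lra.
have d0 : 0 < d by lra.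
pose bt := g * g / (16 * d).
have bte : bt * (16 * d) = g * g by rewrite /bt; field; lra.
have bt0 : 0 < bt by rewrite /bt; apply: divr_gt0; nra.
have ge : g = d - N w by [].
clearbody bt g.
have [u [Pu Nu]] := ap bt bt0.
have := Nexp w (w - u) (-1).
rewrite rmorphN1 scaleN1r opprB addrC subrK => hu.
have := lb u Pu; rewrite hu => hd.
have cs := CS w (w - u).
have nb0 := N_ge0 (w - u).
move: hd cs nb0 Nu; clear hu; move: (Q w (w - u)) (N (w - u)) => q nb hd cs nb0 Nu.
have gd : g <= d by lra.
have h0 : 16 * nb * d < g * d.
  have : 16 * nb * d < 16 * bt * d by nra.
  have : g * g <= g * d by nra.
  nra.
have h1 : 16 * nb < g by nra.
have h2 : 15 * g <= - 16 * q by nra.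
nra.
Qed.

Lemma Nup (w : V) (d : R) : 0 <= d ->
  (forall b, 0 < b -> exists u, N u <= d + b /\ N (w - u) < b) -> N w <= d.
Proof.
move=> d0 ap; rewrite leNgt; apply/negP => lt.
pose g := N w - d.
have g0 : 0 < g by rewrite /g; lra.
pose bt := g * g / (16 * (d + 1 + g)).
have bte : bt * (16 * (d + 1 + g)) = g * g by rewrite /bt; field; lra.
have bt0 : 0 < bt by rewrite /bt; apply: divr_gt0; nra.
have ge : g = N w - d by [].
clearbody bt g.
have [u [Nu Nwu]] := ap bt bt0.
have := Nexp u (w - u) 1.
rewrite rmorph1 scale1r addrC subrK expr1n mul1r mul1r => hw.
have cs := CS u (w - u).
have nb0 := N_ge0 (w - u); have nu0 := N_ge0 u.
move: hw cs nb0 nu0 Nu Nwu lt ge; move: (Q u (w - u)) (N (w - u)) (N u) (N w) => q nb nu nw hw cs nb0 nu0 Nu Nwu lt ge.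
have h1 : 16 * bt <= g by nra.
have h2 : 4 * nu * nb <= 4 * (d + 1 + g) * bt by nra.
have h3 : 7 * g <= 8 * q by nra.
nra.
Qed.


Lemma vmid (x p q : V) :
  x - p + (x - q) = r2f 2%:R *: (x - (r2f 2^-1 *: q + r2f 2^-1 *: p)).
Proof.
have e : r2f 2%:R * r2f 2^-1 = 1 by rewrite -rmorphM mulfV ?rmorph1 ?pnatr_eq0.
rewrite scalerBr scalerDr !scalerA e !scale1r rmorph_nat scaler_nat mulr2n.
by rewrite opprD addrACA [- p + _]addrC.
Qed.

Lemma Nscale2 v : N (r2f 2%:R *: v) = 4 * N v.
Proof.
have := Nexp 0 v 2%:R; rewrite add0r /Q !add0r N0 => ->; ring.
Qed.

Lemma density (D : V -> Prop) (D0 : D 0)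
  (DL : forall a x y, D x -> D y -> D (a *: x + y))
  (Dperp : forall z, (forall d, D d -> ip d z = 0) -> z = 0) :
  dense_in ip D.
Proof.
have DZ a x : D x -> D (a *: x) by move=> Dx; rewrite -[a *: x]addr0; apply: DL.
have DB x y : D x -> D y -> D (x - y).
  by move=> Dx Dy; rewrite addrC -scaleN1r; apply: DL.
move=> x e e0.
pose E := fun r : R => exists d, D d /\ r = N (x - d).
have Ene : classical_sets.nonempty E by exists (N (x - 0)); exists 0.
have Elb : classical_sets.has_lbound E.
  by exists 0 => r [d [_ ->]]; apply: N_ge0.
pose dl := reals.inf E.
have lbE d : D d -> dl <= N (x - d).
  by move=> Dd; apply: (reals.ge_inf Elb); exists d.
have dl0 : 0 <= dl.
  by apply: reals.lb_le_inf => // r [d [_ ->]]; apply: N_ge0.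
have adh t : 0 < t -> exists d, D d /\ N (x - d) < dl + t.
  move=> t0; have [r [d [Dd ->]] hr] := reals.inf_adherent t0 (conj Ene Elb).
  by exists d.
suff dl_le0 : dl <= 0.
  have [e' [e'0 ->]] := pos_r2f _ e0.
  have [d [Dd hd]] := adh e' e'0.
  exists d; split => //; rewrite /ip_norm2 -NE r2f_lt; lra.
have seq n : exists d, D d /\ N (x - d) < dl + (n.+1%:R)^-1.
  by apply: adh; rewrite invr_gt0 ltr0Sn.
pose dn n := proj1_sig (boolp.cid (seq n)).
have Ddn n : D (dn n) by rewrite /dn; case: (boolp.cid (seq n)) => ? [].
have Ndn n : N (x - dn n) < dl + (n.+1%:R)^-1.
  by rewrite /dn; case: (boolp.cid (seq n)) => ? [].
clearbody dn.
have cau m n : N (dn m - dn n) <= 2 * (m.+1%:R)^-1 + 2 * (n.+1%:R)^-1.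
  have p1 := Nexp (x - dn n) (x - dn m) 1.
  have p2 := Nexp (x - dn n) (x - dn m) (-1).
  rewrite rmorph1 scale1r in p1; rewrite rmorphN1 scaleN1r v2 in p2.
  rewrite vmid Nscale2 in p1.
  have := lbE _ (DL (r2f 2^-1) _ _ (Ddn m) (DZ (r2f 2^-1) _ (Ddn n))).
  have := Ndn m; have := Ndn n.
  move: (m.+1%:R^-1 : R) (n.+1%:R^-1 : R) => im in_; lra.
have [y hy] : exists y : V, forall e : F, 0 < e -> exists N0 : nat, forall n : nat,
        (N0 <= n)%N -> ip_norm2 ip (dn n - y) < e.
  apply: (ip_complete Hh) => e1 e10.
  have [e' [e'0 ->]] := pos_r2f _ e10.
  have [n0 hn0] := small_inv (e' / 4) ltac:(lra).
  exists n0 => m n hm hn; rewrite /ip_norm2 -NE r2f_lt.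
  have := cau m n; have := hn0 _ hm; have := hn0 _ hn; move: (m.+1%:R^-1 : R) (n.+1%:R^-1 : R) => im in_; lra.
have conv b : 0 < b -> exists n0, forall n, (n0 <= n)%N -> N (dn n - y) < b.
  move=> b0; have [n0 hn0] := hy (r2f b) ltac:(by rewrite -(rmorph0 r2f) r2f_lt).
  by exists n0 => n hn; rewrite -r2f_lt NE; apply: hn0.
pose z := x - y.
have low d s : D d -> dl <= N (z + r2f s *: d).
  move=> Dd; apply: (Nlow _ (fun u => exists d', D d' /\ u = x - d')).
    move=> b b0; have [n0 hn0] := conv b b0.
    exists (x - (dn n0 - r2f s *: d)); split.
      by exists (dn n0 - r2f s *: d); split => //; apply: DB => //; apply: DZ.
    by rewrite /z v3; apply: hn0.
  by move=> u [d' [Dd' ->]]; apply: lbE.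
have up : N z <= dl.
  apply: Nup => // b b0; have [n0 hn0] := conv b b0.
  have [n1 hn1] := small_inv _ b0.
  exists (x - dn (maxn n0 n1)); split.
    have := Ndn (maxn n0 n1); have := hn1 (maxn n0 n1) (leq_maxr _ _); move: ((maxn n0 n1).+1%:R^-1 : R) => im; lra.
  by rewrite /z v2; apply: hn0; rewrite leq_maxl.
have Q0 d : D d -> Q z d = 0.
  move=> Dd.
  have h s : 0 <= s * Q z d + s ^+ 2 * N d.
    have := low d s Dd; rewrite Nexp; lra.
  have Nd0 := N_ge0 d.
  pose s := - Q z d / (N d + 1).
  have Nd1 : 0 < N d + 1 by lra.
  have es : s * (N d + 1) = - Q z d by rewrite /s -mulrA mulVf ?mulr1 // gt_eqF.
  have := h s; clearbody s.
  have eQ : Q z d = - (s * (N d + 1)) by rewrite es opprK.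
  rewrite eQ; move: (N d) Nd0 => nd nd0 hs.
  have s2 : s ^+ 2 <= 0 by nra.
  have s0 : s = 0 by nra.
  by rewrite s0 mul0r oppr0.
have zp : forall d, D d -> ip d z = 0.
  move=> d Dd; pose w := ip d z.
  have := Q0 _ (DZ (cj w) _ Dd).
  move/(congr1 r2f); rewrite QE rmorph0 ipZl ipZr cjK (ip_sym Hh d z) -/w.
  move=> h2; apply: cj_nz.
  have : (w * cj w) *+ 2 = 0 by rewrite mulr2n; rewrite [cj w * w]mulrC in h2.
  by move/eqP; rewrite mulrn_eq0 /= => /eqP.
have z0 : z = 0 := Dperp z zp.
by have := low 0 0 D0; rewrite z0 scaler0 addr0 N0.
Qed.

End Sp.

Lemma thm38_gen : thm38 cj.
Proof.
move=> H K ipH ipK hH hK S T.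
have adjD h1 h2 k1 k2 : adjoint_rel ipK ipH T h1 k1 -> adjoint_rel ipK ipH T h2 k2 ->
    adjoint_rel ipK ipH T (h1 + h2) (k1 + k2).
  by move=> a1 a2 k Dk; rewrite (ipDr _ _ hH) (ipDr _ _ hK) a1 // a2.
have adjB h1 h2 k1 k2 : adjoint_rel ipK ipH T h1 k1 -> adjoint_rel ipK ipH T h2 k2 ->
    adjoint_rel ipK ipH T (h1 - h2) (k1 - k2).
  by move=> a1 a2 k Dk; rewrite (ipDr _ _ hH) (ipDr _ _ hK) (ipNr _ _ hH) (ipNr _ _ hK) a1 // a2.
have adj00 : adjoint_rel ipK ipH T 0 0.
  by move=> k Dk; rewrite (ip0r _ _ hH) (ip0r _ _ hK).
have ranT h : (forall y, ran_rel (graph T) y -> ipH y h = 0) <-> adjoint_rel ipK ipH T h 0.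
  split.
    by move=> perp k Dk; rewrite (ip0r _ _ hK); apply: perp; exists k.
  by move=> a y [k [Dk <-]]; rewrite a // (ip0r _ _ hK).
split.
  case=> dens eqS; split.
    move=> h; rewrite ranT; exact: (iff_sym (eqS h 0)).
  move=> k [a [b [-> [[h1 g1] [h2 g2]]]]].
  have a1 := (eqS _ _).1 g1.
  have ad := adjD _ _ _ _ a1 g2.
  by exists (h1 + h2); split => //; apply/(eqS _ _).
case=> ha hb.
have gS00 : graph S 0 0 by split; [apply: dom0 | apply: app0].
have mul0 k' : adjoint_rel ipK ipH T 0 k' -> k' = 0.
  move=> a0.
  have [h [[Sh Shk] aT]] : ran_rel (fun h k' => graph S h k' /\ adjoint_rel ipK ipH T h k') k'.
    by apply: hb; exists 0, k'; split; [rewrite add0r | split; [exists 0 | exists 0]].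
  have : adjoint_rel ipK ipH T h 0.
    have := adjB _ _ _ _ aT a0; by rewrite subr0 subrr.
  by move/ranT/ha => [_ Sh0]; rewrite -Shk.
split.
  apply: (density _ _ hK (dom T) (dom0 T) (@domL _ _ _ T)) => z hz; apply: mul0 => k Dk.
  by rewrite (ip0r _ _ hH) hz.
move=> h k; split.
  move=> gS.
  have [h' [[Sh' Sh'k] aT]] : ran_rel (fun h k' => graph S h k' /\ adjoint_rel ipK ipH T h k') k.
    by apply: hb; exists k, 0; split; [rewrite addr0 | split; [exists h | exists 0]].
  case: gS => Sh Shk.
  have : dom S (h - h') /\ app S (h - h') = 0.
    by split; [apply: domB | rewrite appB // Shk Sh'k subrr].
  move/ha/ranT => a0.
  by have := adjD _ _ _ _ a0 aT; rewrite subrK add0r.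
move=> ad.
have [h' [[Sh' Sh'k] aT]] : ran_rel (fun h k' => graph S h k' /\ adjoint_rel ipK ipH T h k') k.
  by apply: hb; exists 0, k; split; [rewrite add0r | split; [exists 0 | exists h]].
have := adjB _ _ _ _ ad aT; rewrite subrr => /ranT/ha [Sd Sd0].
have -> : h = (h - h') + h' by rewrite subrK.
by split; [apply: domD | rewrite appD // Sd0 add0r].
Qed.

End Gen.

Theorem theorem3p8 (R : realType) :
  thm38 (fun x : R => x) /\ thm38 (fun z : R[i] => Num.conj z).
Proof.
split.
  apply: (@thm38_gen R R _ idfun idfun) => //.
  by move=> w /eqP; rewrite mulf_eq0 orbb => /eqP.
apply: (@thm38_gen R R[i] _ (real_complex R) (@complex.Re R)).
- by move=> a b; rewrite rmorphD.
- by move=> a b; rewrite rmorphM.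
- by move=> a; rewrite conjCK.
- by move=> s; apply: conj_Creal; apply/complex_realP; exists s.
- by move=> w /eqP; rewrite mul_conjC_eq0 => /eqP.
- by move=> a b; rewrite lecR.
- by move=> a b; rewrite ltcR.
- by move=> z z0; apply: RRe_real; apply: ger0_real.
Qed.
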